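(* Let $n\le -1$ be an odd integer. In $\mathbb{F}_3[v]$, the irreducible polynomial $a=v^2+v-1$ divides the reduction of $g_n$ if and only if $n\equiv 1\pmod 4$; moreover $a^2$ never divides the reduction of $g_n$.
   Context: Let $a=v^2+v-1$ and $B=(v^2-1)(v^2-v-1)$. For odd $n\le -1$ with $k=(1-n)/2$, define $g_n$ by $g_n=\big[(a+b)^k-(a-b)^k-(a+b)^{k+2}+(a-b)^{k+2}\big]/b$, where $b$ is a formal square root of $B$; the expression is a polynomial in $a$ and $b^2=B$, hence $g_n\in\mathbb{Z}[v]$. *)

(* Defs.v *)
From HB Require Import structures.
From mathcomp Require Import all_boot all_order all_algebra.
Set Implicit Arguments. Unset Strict Implicit. Unset Printing Implicit Defensive.
Import Order.TTheory GRing.Theory Num.Theory.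
Local Open Scope ring_scope.

Definition a_poly : {poly int} := 'X^2 + 'X - 1.
Definition B_poly : {poly int} := ('X^2 - 1) * ('X^2 - 'X - 1).

(* Elements x + y*b of Z[v][b]/(b^2 - B), represented as pairs (x, y). *)
Definition qelt := ({poly int} * {poly int})%type.
Definition qadd (p q : qelt) : qelt := (p.1 + q.1, p.2 + q.2).
Definition qopp (p : qelt) : qelt := (- p.1, - p.2).
Definition qmul (p q : qelt) : qelt :=
  (p.1 * q.1 + p.2 * q.2 * B_poly, p.1 * q.2 + p.2 * q.1).
Fixpoint qpow (u : qelt) (m : nat) : qelt :=
  match m with 0%N => (1, 0) | m'.+1 => qmul (qpow u m') u end.

Definition a_plus_b : qelt := (a_poly, 1).
Definition a_minus_b : qelt := (a_poly, -1).

Definition kk (n : int) : nat := ((absz (1 - n)) %/ 2)%N.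

(* numerator (a+b)^k - (a-b)^k - (a+b)^(k+2) + (a-b)^(k+2), an element of the
   form 0 + y*b; g_n is y, i.e. the numerator divided by b. *)
Definition g_numer (n : int) : qelt :=
  let k := kk n in
  qadd (qadd (qadd (qpow a_plus_b k) (qopp (qpow a_minus_b k)))
             (qopp (qpow a_plus_b k.+2)))
       (qpow a_minus_b k.+2).
Definition g (n : int) : {poly int} := (g_numer n).2.

Definition red3 (p : {poly int}) : {poly 'F_3} := map_poly (fun z : int => z%:~R) p.

(* Main.v *)
Require Import Defs.
From HB Require Import structures.
From mathcomp Require Import all_boot all_order all_algebra.
From Stdlib Require Import Ring.
Import Order.TTheory GRing.Theory Num.Theory.
Local Open Scope ring_scope.
Section S.
Variable R : comRingType.
Definition radd (x y : R) : R := x + y.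
Definition rmul (x y : R) : R := x * y.
Definition ropp (x : R) : R := - x.
Definition rsub (x y : R) : R := x - y.
Definition r0 : R := 0.
Definition rnat (x : R) n : R := x *+ n.
Definition rexp (x : R) n : R := x ^+ n.
Definition r1 : R := 1.
Lemma R_rt : @ring_theory R r0 r1 radd rmul rsub ropp eq.
Proof.
split=> *; rewrite /radd/rmul/ropp/rsub/r0/r1 //;
 [exact: add0r|exact: addrC|exact: addrA|exact: mul1r|exact: mulrC
 |exact: mulrA|exact: mulrDl|exact: subrr].
Qed.
Add Ring Rring : R_rt.
Ltac rfold := repeat match goal with
 | |- context [@Algebra.add ?i ?x ?y] => change (@Algebra.add i x y) with (radd x y)
 | |- context [@GRing.mul ?i ?x ?y] => change (@GRing.mul i x y) with (rmul x y)
 | |- context [@Algebra.opp ?i ?x] => change (@Algebra.opp i x) with (ropp x)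
 | |- context [@Algebra.natmul ?i ?x ?n] => change (@Algebra.natmul i x n) with (rnat x n)
 | |- context [@GRing.exp ?i ?x ?n] => change (@GRing.exp i x n) with (rexp x n)
 | |- context [@Algebra.zero ?i] => change (@Algebra.zero i) with r0
 | |- context [@GRing.one ?i] => change (@GRing.one i) with r1
 end.
Ltac rring := rewrite ?expr1 ?expr2; match goal with |- @eq _ ?a ?b => change (@eq R a b) end; rfold; ring.
Variables (A Bv : R).
Definition qm (p q : R * R) : R * R := (p.1*q.1 + p.2*q.2*Bv, p.1*q.2 + p.2*q.1).
Fixpoint qp (u : R * R) (m : nat) : R * R :=
  match m with 0%N => (1, 0) | m'.+1 => qm (qp u m') u end.
Definition P m := qp (A, 1) m.

Lemma qp_neg m : qp (A, -1) m = ((P m).1, - (P m).2).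
Proof.
elim: m => [|m IH] /=; first by rewrite oppr0.
rewrite IH /P /qm /=; congr pair; rring.
Qed.

Definition w (j : nat) : R := (j%:R * (1 + 1)) * Bv ^+ j.-1.

Lemma wS j : w j.+1 = w j * Bv + (1 + 1) * Bv ^+ j.
Proof.
rewrite /w; case: j => [|j] /=.
  by rewrite expr0 mulr1n mulr0n; rring.
rewrite exprSr (mulrSr _ j.+1); rring.
Qed.

Lemma even_form j : exists c d,
  (P (2 * j)).1 = Bv ^+ j + A ^+ 2 * c /\ (P (2 * j)).2 = A * w j + A ^+ 2 * d.
Proof.
elim: j => [|j [c [d [H1 H2]]]].
  exists 0, 0; rewrite /P /= /w /= mulr0n expr0; split; rring.
have -> : (2 * j.+1 = (2 * j).+2)%N by rewrite mulnS.
rewrite /P /= -/(P (2 * j)) /qm /= H1 H2 wS (exprSr Bv j).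
exists (Bv ^+ j + c * (A * A + Bv) + (w j * Bv + w j * Bv) + (A * d * Bv + A * d * Bv)).
exists (A * c + A * c + w j * A + d * (A * A + Bv)).
split; rring.
Qed.

Lemma odd_form j : exists e, (P (2 * j).+1).2 = Bv ^+ j + A * e.
Proof.
have [c [d [H1 H2]]] := even_form j.
rewrite /P /= -/(P (2 * j)) /qm /= H1 H2.
exists (A * c + A * w j + A * A * d); rring.
Qed.

Lemma odd_diff j : exists e,
  (P (2 * j).+3).2 - (P (2 * j).+1).2 = Bv ^+ j * (Bv - 1) + A * e.
Proof.
have -> : ((2 * j).+3 = (2 * j.+1).+1)%N by rewrite mulnS.
have [e1 H1] := odd_form j; have [e2 H2] := odd_form j.+1.
rewrite H1 H2 exprSr; exists (e2 - e1); rring.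
Qed.

Lemma even_diff j : exists e,
  (P (2 * j).+4).2 - (P (2 * j).+2).2 =
  A * ((1 + 1) * Bv ^+ j * ((j.+2)%:R * Bv - (j.+1)%:R)) + A ^+ 2 * e.
Proof.
have E1 : ((2 * j).+2 = 2 * j.+1)%N by rewrite mulnS.
have E2 : ((2 * j).+4 = 2 * j.+2)%N by rewrite !mulnS.
have [c1 [d1 [_ H1]]] := even_form j.+1.
have [c2 [d2 [_ H2]]] := even_form j.+2.
rewrite E2 E1 H1 H2 /w /= exprSr; exists (d2 - d1); rring.
Qed.

Lemma idB (x : R) :
  (x*x - 1)*(x*x - x - 1) = (x*x + x + 1) * (x*x + x - 1) + (x - 1) + (1+1+1)*(1 - x*x - x*x*x).
Proof. rring. Qed.
Lemma idL (q a x p0 : R) : (p0+1+1)*(q*a + (x - 1)) - (p0+1) =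
  ((p0+1+1)*q)*a + ((p0+1+1)*x + p0) - (1+1+1)*(p0+1).
Proof. rring. Qed.
Lemma R_id1 (c r : R) : -(c * r + 1) = -(r + 1) * c + (c - 1).
Proof. rring. Qed.
Lemma R_id2 (c r : R) : -(c * r + (c - 1)) = -(r + 1) * c + 1.
Proof. rring. Qed.
Lemma int_id1 (c r : R) : -(c * r + 1) = -(r + 1) * c + (c - 1).
Proof. rring. Qed.
Lemma int_id2 (c r : R) : -(c * r + (c - 1)) = -(r + 1) * c + 1.
Proof. rring. Qed.
End S.

Notation F := {poly 'F_3}.
Definition AF : F := red3 a_poly.
Definition BF : F := red3 B_poly.

Lemma AF_E : AF = 'X * 'X + 'X - 1.
Proof. by rewrite /AF /red3 /a_poly rmorphB rmorphD /= map_polyXn map_polyX rmorph1 expr2. Qed.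

Lemma BF_E : BF = ('X * 'X - 1) * ('X * 'X - 'X - 1).
Proof.
by rewrite /BF /red3 /B_poly rmorphM !rmorphB /= !map_polyXn map_polyX rmorph1 expr2.
Qed.

Lemma three0 : (1 + 1 + 1 : F) = 0.
Proof.
have -> : (1 + 1 + 1 : F) = 3%:R by rewrite !mulrS mulr0n addr0 addrA.
rewrite -polyC_natr.
have -> : (3%:R : 'F_3) = 0 by apply/eqP.
by rewrite polyC0.
Qed.

Lemma BF_dec : BF = ('X * 'X + 'X + 1) * AF + ('X - 1).
Proof. by rewrite BF_E AF_E idB three0 mul0r addr0. Qed.

Lemma noroot z : ~~ root AF z.
Proof.
rewrite AF_E rootE !hornerE.
by case: z => [[|[|[|?]]] ?] //.
Qed.

Lemma cop_const d : d != 0 -> coprimep AF d%:P.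
Proof.
move=> dn; apply/Bezout_eq1_coprimepP; exists (0, d^-1%:P) => /=.
by rewrite mul0r add0r -polyCM mulVf // polyC1.
Qed.

Lemma cop_lin (c d : 'F_3) : (c != 0) || (d != 0) -> coprimep AF (c%:P * 'X + d%:P).
Proof.
case: (eqVneq c 0) => [-> /= dn|cn _].
  by rewrite polyC0 mul0r add0r cop_const.
have -> : c%:P * 'X + d%:P = c%:P * ('X - (- d / c)%:P).
  by rewrite mulrBr -polyCM (mulrC c) divfK // polyCN opprK.
by rewrite coprimepMr cop_const // coprimep_XsubC noroot.
Qed.

Lemma AF_size : size AF = 3%N.
Proof.
rewrite AF_E -expr2 -addrA size_addl ?size_polyXn //.
by rewrite -polyC1 size_XsubC.
Qed.

Lemma AF_neq0 : AF != 0.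
Proof. by rewrite -size_poly_eq0 AF_size. Qed.

Lemma not_cop_dvd p : AF %| p -> ~~ coprimep AF p.
Proof.
move=> h; apply/negP => /(coprimep_dvdl h).
by rewrite coprimepp AF_size.
Qed.

Lemma cop_BF : coprimep AF BF.
Proof.
rewrite BF_dec coprimep_addl_mul -polyC1 coprimep_XsubC; exact: noroot.
Qed.

Lemma cop_BF1 : coprimep AF (BF - 1).
Proof.
rewrite BF_dec -addrA coprimep_addl_mul -addrA -opprD -polyC1 -polyCD coprimep_XsubC; exact: noroot.
Qed.

Lemma cop_2 : coprimep AF (1 + 1).
Proof. by rewrite -polyC1 -polyCD cop_const. Qed.

Lemma cop_L j : coprimep AF ((j.+2)%:R * BF - (j.+1)%:R).
Proof.
have -> : (j.+2)%:R = (j%:R + 1 + 1 : F) by rewrite !mulrSr.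
have -> : (j.+1)%:R = (j%:R + 1 : F) by rewrite mulrSr.
rewrite BF_dec idL three0 mul0r subr0 coprimep_addl_mul.
rewrite -polyC_natr -polyC1 -!polyCD; apply: cop_lin.
case: (eqVneq (j%:R : 'F_3) 0) => [->|h]; [by []|by apply/orP; right].
Qed.

Lemma red3D p q : red3 (p + q) = red3 p + red3 q.
Proof. by rewrite /red3 rmorphD. Qed.
Lemma red3M p q : red3 (p * q) = red3 p * red3 q.
Proof. by rewrite /red3 rmorphM. Qed.
Lemma red3N p : red3 (- p) = - red3 p.
Proof. by rewrite /red3 rmorphN. Qed.

Lemma red_qpow s m :
  (red3 (qpow (a_poly, s) m).1, red3 (qpow (a_poly, s) m).2) = qp _ BF (AF, red3 s) m.
Proof.
elim: m => [|m IH] /=; first by rewrite /red3 rmorph1 rmorph0.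
rewrite -IH /qm /qmul /AF /BF /= -!red3M -!red3D.
done.
Qed.

Lemma FzzN (z : F) : z + z = - z.
Proof.
apply/eqP; rewrite -subr_eq0 opprK.
have -> : z + z + z = (1 + 1 + 1) * z by rewrite !mulrDl mul1r.
by rewrite three0 mul0r.
Qed.

Lemma red31 : red3 1 = 1.
Proof. by rewrite /red3 rmorph1. Qed.

Lemma red_g n : red3 (g n) = (P _ AF BF (kk n).+2).2 - (P _ AF BF (kk n)).2.
Proof.
have qadd2 p q : (qadd p q).2 = p.2 + q.2 by [].
have qopp2 p : (qopp p).2 = - p.2 by [].
rewrite /g /g_numer !qadd2 !qopp2.
have E s m : red3 (qpow (a_poly, s) m).2 = (qp _ BF (AF, red3 s) m).2 by rewrite -red_qpow.
rewrite red3D red3D red3D !red3N /a_plus_b /a_minus_b !E red3N red31 !qp_neg.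
set y0 := (P _ AF BF (kk n)).2.
set y2 := (P _ AF BF (kk n).+2).2.
rewrite /=.
rewrite -addrA -opprD !FzzN opprK addrC.
by rewrite opprK FzzN.
Qed.

Lemma odd_case j :
  ~~ (AF %| (P _ AF BF (2 * j).+3).2 - (P _ AF BF (2 * j).+1).2).
Proof.
have [e ->] := odd_diff _ AF BF j.
rewrite dvdp_addl ?dvdp_mulIl //.
apply/negP => h; move: (not_cop_dvd _ h).
by rewrite coprimepMr (coprimep_expr _ cop_BF) cop_BF1.
Qed.

Lemma even_case j :
  (AF %| (P _ AF BF (2 * j).+4).2 - (P _ AF BF (2 * j).+2).2) /\
  ~~ (AF ^+ 2 %| (P _ AF BF (2 * j).+4).2 - (P _ AF BF (2 * j).+2).2).
Proof.
have [e ->] := even_diff _ AF BF j.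
rewrite (expr2 AF) -(mulrA AF AF e) -mulrDr; split; first exact: dvdp_mulIl.
rewrite dvdp_mul2l ?AF_neq0 // dvdp_addl ?dvdp_mulIl //.
apply/negP => h; move: (not_cop_dvd _ h).
by rewrite !coprimepMr cop_2 (coprimep_expr _ cop_BF) cop_L.
Qed.

Lemma kk_neg q : kk (Negz (2 * q)) = q.+1.
Proof.
rewrite /kk NegzE opprK.
have -> : (1 + Posz (2 * q).+1 = Posz (2 * q.+1))%R by rewrite -PoszD add1n mulnS.
by rewrite absz_nat mulKn.
Qed.


Lemma mod4 q : ((Negz (2 * q)) %% 4 == 1)%Z = odd q.
Proof.
have [r [->|->]] : exists r, q = (2 * r)%N \/ q = (2 * r).+1.
  exists q./2; case h: (odd q); [right|left];
  by rewrite -[q in LHS]odd_double_half h -mul2n.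
- have -> : odd (2 * r) = false by rewrite mul2n odd_double.
  rewrite NegzE mulnA -[(2 * 2 * r).+1]addn1 PoszD PoszM.
  by rewrite int_id1 modzMDl.
- have -> : odd (2 * r).+1 = true by rewrite mul2n /= odd_double.
  rewrite NegzE mulnS mulnA.
  have -> : (2 + 2 * 2 * r).+1 = (2 * 2 * r + 3)%N by rewrite addnC -addnS.
  rewrite PoszD PoszM.
  have -> : Posz 3 = (4 - 1)%R by [].
  by rewrite int_id2 modzMDl.
Qed.

Theorem lemma5p6 (n : int) (hn : n <= -1) (hodd : odd (absz n)) :
  (red3 a_poly %| red3 (g n)) = (n %% 4 == 1)%Z
  /\ ~~ (red3 a_poly ^+ 2 %| red3 (g n)).
Proof.
case: n hn hodd => [m|m] hn hodd; first by [].
have [q ->] : exists q, m = (2 * q)%N.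
  exists m./2; move: hodd => /= hodd.
  by rewrite -[m in LHS]odd_double_half (negbTE hodd) add0n mul2n.
rewrite -/AF red_g kk_neg mod4.
have [j [->|->]] : exists j, q = (2 * j)%N \/ q = (2 * j).+1.
  exists q./2; case h: (odd q); [right|left];
  by rewrite -[q in LHS]odd_double_half h -mul2n.
- have -> : odd (2 * j) = false by rewrite mul2n odd_double.
  have H := odd_case j; split; first exact: negbTE.
  apply: contra H => H; apply: dvdp_trans H.
  by rewrite expr2 dvdp_mulIl.
- have -> : odd (2 * j).+1 = true by rewrite mul2n /= odd_double.
  have [H1 H2] := even_case j; split=> //.
Qed.
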